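(* Let $\rho_\lozenge=\rho(1/2,\sqrt{15}/2)$ be the planar unit rhombus with diagonals $1/2$ and $\sqrt{15}/2$, and let $2\rho_\lozenge$ be its dilation by factor $2$ (a planar rhombus with side length $2$ and diagonals $1$ and $\sqrt{15}$, regarded as a closed polygon with $8$ unit edges). If $2\rho_\lozenge$ cannot be domed, then the isosceles triangle with side lengths $(2,2,1)$ cannot be domed and $\rho_\lozenge$ cannot be domed.
   Context: A unit rhombus $\rho(a,b)$ is a closed polygon $[v_1v_2v_3v_4]$ in $\mathbb{R}^3$ with four sides of length $1$ and $|v_1v_3|=a$, $|v_2v_4|=b$. Polygons with integer side lengths are regarded as polygons with unit edges by subdividing each side into unit segments. A closed polygon with unit edges can be domed if there is a finite connected 2-dimensional simplicial complex which is a compact surface with a single boundary cycle, with a map to $\mathbb{R}^3$ linear on simplices sending each triangle to a unit equilateral triangle and the boundary cycle onto the polygon vertex by vertex in cyclic order. *)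

(* Defs.v *)
From Stdlib Require Import Reals.
From mathcomp Require Import all_boot.

Set Implicit Arguments.
Unset Strict Implicit.
Unset Printing Implicit Defensive.

Local Open Scope R_scope.
Definition point := (R * R * R)%type.

Definition pt (x y z : R) : point := (x, y, z).

Definition dist2 (p q : point) : R :=
  let '(x1, y1, z1) := p in
  let '(x2, y2, z2) := q in
  ((x1 - x2) * (x1 - x2) + (y1 - y2) * (y1 - y2) + (z1 - z2) * (z1 - z2)).

(* A closed polygon is the cyclic sequence of its vertices p_0,...,p_{n-1}
   (edges p_i p_{i+1 mod n}). *)
Definition polygon := seq point.

Local Close Scope R_scope.
Section Complex.
Variable V : finType.
Variable T : {set {set V}}.   (* the triangles (2-simplices) *)

Definition cedge (u v : V) : bool :=
  (u != v) && [exists t in T, (u \in t) && (v \in t)].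

Definition edge_mult (u v : V) : nat := #|[set t in T | (u \in t) && (v \in t)]|.

Definition bdry_edge (u v : V) : bool := cedge u v && (edge_mult u v == 1).

Definition link_rel (v : V) : rel V :=
  fun w x => (w != x) && [exists t in T, t == [set v; w; x]].

(* T is a finite connected 2-dimensional simplicial complex which is a
   compact surface (with boundary): pure of dimension 2, every edge lies in
   one or two triangles, and the link of every vertex is connected
   (hence a path or a cycle). *)
Definition is_surface_complex : Prop :=
  [/\ forall t, t \in T -> #|t| = 3,
      forall v : V, exists2 t, t \in T & v \in t,
      forall u v : V, cedge u v -> edge_mult u v = 1 \/ edge_mult u v = 2,
      forall v w x : V, cedge v w -> cedge v x -> connect (link_rel v) w x
    & forall u v : V, connect cedge u v].

(* b : 'I_n -> V enumerates the (single) boundary cycle in cyclic order. *)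
Definition single_boundary_cycle (n : nat) (b : 'I_n -> V) : Prop :=
  injective b /\
  forall u v : V, bdry_edge u v <->
    exists i j : 'I_n, j = (i.+1 %% n) :> nat /\
      ((u = b i /\ v = b j) \/ (u = b j /\ v = b i)).

(* f : V -> R^3 (extended linearly on simplices) sends every triangle to a
   unit equilateral triangle. *)
Definition unit_triangles (f : V -> point) : Prop :=
  forall t, t \in T -> forall u v, u \in t -> v \in t -> u != v ->
    dist2 (f u) (f v) = R1.

End Complex.

Definition domable (P : polygon) : Prop :=
  exists (V : finType) (T : {set {set V}}) (f : V -> point)
         (b : 'I_(size P) -> V),
    [/\ is_surface_complex T,
        single_boundary_cycle T b,
        unit_triangles T f
      & forall i : 'I_(size P), f (b i) = nth (pt 0 0 0) P i].

Local Open Scope R_scope.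
Definition s15 : R := sqrt 15.

(* rho_diamond = rho(1/2, sqrt15/2): v1v3 = 1/2, v2v4 = sqrt15/2. *)
Definition rho_diamond : polygon :=
  [:: pt (-1/4) 0 0; pt 0 (s15/4) 0; pt (1/4) 0 0; pt 0 (-(s15/4)) 0].

(* 2 rho_diamond, each side of length 2 subdivided at its midpoint. *)
Definition rho_diamond2 : polygon :=
  [:: pt (-1/2) 0 0; pt (-1/4) (s15/4) 0;
      pt 0 (s15/2) 0; pt (1/4) (s15/4) 0;
      pt (1/2) 0 0; pt (1/4) (-(s15/4)) 0;
      pt 0 (-(s15/2)) 0; pt (-1/4) (-(s15/4)) 0].

(* isosceles triangle with sides (2,2,1), sides of length 2 subdivided. *)
Definition tri221 : polygon :=
  [:: pt (-1/2) 0 0; pt (1/2) 0 0; pt (1/4) (s15/4) 0;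
      pt 0 (s15/2) 0; pt (-1/4) (s15/4) 0].

(* Main.v *)
Require Import Defs.
From Stdlib Require Import Reals Lra.
From mathcomp Require Import all_boot zify.
Set Implicit Arguments. Unset Strict Implicit. Unset Printing Implicit Defensive.


Definition cnb n (i j : 'I_n) : bool := (nat_of_ord j == i.+1 %% n) || (nat_of_ord i == j.+1 %% n).

Lemma cnb_sym n (i j : 'I_n) : cnb i j = cnb j i.
Proof. by rewrite /cnb orbC. Qed.

Section Basic.
Variables (V : finType) (T : {set {set V}}).

Lemma cedgeE u v : cedge T u v = (u != v) && (0 < edge_mult T u v).
Proof.
rewrite /cedge /edge_mult card_gt0; congr (_ && _).
apply/existsP/set0Pn => [[t /andP[tT H]]|[t]].
  by exists t; rewrite inE tT.
by rewrite inE => /andP[tT H]; exists t; rewrite tT.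
Qed.

Lemma sbc_iff n (b : 'I_n -> V) : single_boundary_cycle T b <->
  injective b /\ forall u v, bdry_edge T u v <-> exists i j, cnb i j && (u == b i) && (v == b j).
Proof.
split=> [[Hi H]|[Hi H]]; split=> // u v.
  rewrite H; split=> [[i [j [Hj [[-> ->]|[-> ->]]]]]|[i [j /andP[/andP[Hc /eqP->] /eqP->]]]].
  - by exists i, j; rewrite !eqxx !andbT /cnb Hj eqxx.
  - by exists j, i; rewrite !eqxx !andbT /cnb Hj eqxx orbT.
  - move: Hc; rewrite /cnb => /orP[/eqP Hj|/eqP Hj].
      by exists i, j; split=> //; left.
    by exists j, i; split=> //; right.
rewrite H; split=> [[i [j /andP[/andP[Hc /eqP->] /eqP->]]]|[i [j [Hj [[-> ->]|[-> ->]]]]]].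
  - move: Hc; rewrite /cnb => /orP[/eqP Hj|/eqP Hj].
      by exists i, j; split=> //; left.
    by exists j, i; split=> //; right.
  - by exists i, j; rewrite !eqxx !andbT /cnb Hj eqxx.
  - by exists j, i; rewrite !eqxx !andbT /cnb Hj eqxx orbT.
Qed.

End Basic.


Local Open Scope R_scope.
Local Notation p0 := (pt 0 0 0).
Local Close Scope R_scope.

Lemma path_map (A B : Type) (e : rel A) (e' : rel B) (h : A -> B) :
  (forall x y, e x y -> e' (h x) (h y)) ->
  forall p x, path e x p -> path e' (h x) (map h p).
Proof. move=> H; elim=> [|y p IH] x //= /andP[exy py]; by rewrite H // IH. Qed.

Lemma connect_map (A B : finType) (e : rel A) (e' : rel B) (h : A -> B) :
  (forall x y, e x y -> e' (h x) (h y)) ->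
  forall x y, connect e x y -> connect e' (h x) (h y).
Proof.
move=> H x y /connectP[p px ->]; apply/connectP; exists (map h p).
  exact: path_map px.
by rewrite last_map.
Qed.

Lemma cnb_cases n (i j : 'I_n) : cnb i j ->
  [\/ (j : nat) = i.+1, (i : nat) = j.+1, (i.+1 = n /\ (j : nat) = 0) | (j.+1 = n /\ (i : nat) = 0)].
Proof.
have md (k : 'I_n) : k.+1 %% n = if k.+1 == n then 0 else k.+1.
  case: eqP => [->|H]; first by rewrite modnn.
  rewrite modn_small //; have := ltn_ord k; lia.
rewrite /cnb => /orP[] /eqP; rewrite md; case: eqP => E H.
- by apply: Or43.
- by apply: Or41.
- by apply: Or44.
- by apply: Or42.
Qed.

Lemma cnb_tri n (i j k : 'I_n) : 3 < n -> i != j -> j != k -> i != k ->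
  cnb i j -> cnb j k -> cnb i k -> False.
Proof.
move=> Hn /eqP Hij /eqP Hjk /eqP Hik.
have Hv (x y : 'I_n) : x <> y -> (x : nat) <> y by move=> H E; apply: H; apply: val_inj.
move: (Hv _ _ Hij) (Hv _ _ Hjk) (Hv _ _ Hik) => Hij' Hjk' Hik'.
move: (ltn_ord i) (ltn_ord j) (ltn_ord k) => Hi Hj Hk.
move=> /cnb_cases c1 /cnb_cases c2 /cnb_cases c3.
by case: c1 => [?|?|[? ?]|[? ?]]; case: c2 => [?|?|[? ?]|[? ?]]; case: c3 => [?|?|[? ?]|[? ?]]; lia.
Qed.

Lemma bdry_b (V : finType) (T : {set {set V}}) n (b : 'I_n -> V) i i' :
  single_boundary_cycle T b -> bdry_edge T (b i) (b i') <-> cnb i i'.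
Proof.
case/sbc_iff=> Hi H; rewrite H; split => [[k [k' /andP[/andP[cc /eqP/Hi Ei] /eqP/Hi Ei']]]|cc].
  by rewrite Ei Ei'.
by exists i, i'; rewrite cc !eqxx.
Qed.

Lemma surf12 (V : finType) (T : {set {set V}}) u v : is_surface_complex T ->
  cedge T u v -> edge_mult T u v = 1 \/ edge_mult T u v = 2.
Proof. by case=> _ _ H _ _; apply: H. Qed.

Lemma bdryE (V : finType) (T : {set {set V}}) u v :
  bdry_edge T u v = (u != v) && (edge_mult T u v == 1).
Proof. by rewrite /bdry_edge cedgeE; case: (edge_mult T u v) => [|[|k]]; rewrite ?andbF ?andbT. Qed.

Section Glue.
Variables (V1 V2 : finType) (T1 : {set {set V1}}) (T2 : {set {set V2}}).
Variables (f1 : V1 -> point) (f2 : V2 -> point) (P1 P2 : polygon).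
Local Notation n1 := (size P1).
Local Notation n2 := (size P2).
Variables (b1 : 'I_n1 -> V1) (b2 : 'I_n2 -> V2).
Hypothesis HS1 : is_surface_complex T1.
Hypothesis HB1 : single_boundary_cycle T1 b1.
Hypothesis HU1 : unit_triangles T1 f1.
Hypothesis HP1 : forall i, f1 (b1 i) = nth p0 P1 i.
Hypothesis HS2 : is_surface_complex T2.
Hypothesis HB2 : single_boundary_cycle T2 b2.
Hypothesis HU2 : unit_triangles T2 f2.
Hypothesis HP2 : forall i, f2 (b2 i) = nth p0 P2 i.
Variable x0 : V1.
Variable c : 'I_n2 -> option 'I_n1.
Hypothesis Hn2 : 3 < n2.
Hypothesis Hc_inj : forall j j' i, c j = Some i -> c j' = Some i -> j = j'.
Hypothesis Hc_ex : exists j0 i0, c j0 = Some i0.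
Hypothesis Hc_nb : forall j i, c j = Some i -> exists j' i', c j' = Some i' /\ cnb i i'.
Hypothesis Hc_cnb : forall j j' i i', c j = Some i -> c j' = Some i' -> cnb j j' = cnb i i'.
Hypothesis Hc_pts : forall j i, c j = Some i -> nth p0 P1 i = nth p0 P2 j.
Hypothesis Hc_sh : forall j j' i i', c j = Some i -> c j' = Some i' -> j <> j' ->
  dist2 (nth p0 P1 i) (nth p0 P1 i') = R1 -> cnb i i'.

Definition sh2 j := c j != None.
Definition sh1 i := [exists j, c j == Some i].
Definition h2 j : 'I_n1 + 'I_n2 := if c j is Some i then inl i else inr j.

Definition S2 : {set V2} := [set b2 j | j in sh2].
Definition dd (v : V2) : V1 :=
  if [pick j | b2 j == v] is Some j then (if c j is Some i then b1 i else x0) else x0.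
Definition GV := (V1 + {v : V2 | v \notin S2})%type.
Definition e1 (a : V1) : GV := inl a.
Definition e2 (v : V2) : GV :=
  if (insub v : option {v : V2 | v \notin S2}) is Some w then inr w else inl (dd v).
Definition E1 (t : {set V1}) : {set GV} := [set e1 x | x in t].
Definition E2 (t : {set V2}) : {set GV} := [set e2 x | x in t].
Definition GT : {set {set GV}} := [set E1 t | t in T1] :|: [set E2 t | t in T2].
Definition Gf (x : GV) : point := match x with inl a => f1 a | inr w => f2 (val w) end.
Definition vtx (s : 'I_n1 + 'I_n2) : GV :=
  match s with inl i => e1 (b1 i) | inr j => e2 (b2 j) end.

Lemma b1_inj : injective b1. Proof. by case: HB1. Qed.
Lemma b2_inj : injective b2. Proof. by case: HB2. Qed.

Lemma e2_sh j i : c j = Some i -> e2 (b2 j) = e1 (b1 i).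
Proof.
move=> cj; rewrite /e2 insubF; last first.
  by apply: negbF; apply: imset_f; rewrite unfold_in /sh2 cj.
rewrite /dd; case: pickP => [j' /eqP/b2_inj -> | /(_ j)]; first by rewrite cj.
by rewrite eqxx.
Qed.

Lemma e2_ns v (H : v \notin S2) : e2 v = inr (Sub v H).
Proof. by rewrite /e2 insubT. Qed.

Lemma e2_val (w : {v : V2 | v \notin S2}) : e2 (val w) = inr w.
Proof. by rewrite /e2 valK. Qed.

Lemma e2_inl v a : e2 v = inl a -> exists j i, [/\ c j = Some i, v = b2 j & a = b1 i].
Proof.
case: (boolP (v \in S2)) => [/imsetP[j]|H]; last by rewrite e2_ns.
rewrite unfold_in /sh2; case cj: (c j) => [i|] // _ ->.
by rewrite (e2_sh cj) => -[<-]; exists j, i.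
Qed.

Lemma e1_inj : injective e1. Proof. by move=> a a' []. Qed.

Lemma S2P v : v \in S2 -> exists j i, c j = Some i /\ v = b2 j.
Proof.
case/imsetP=> j; rewrite unfold_in /sh2; case cj: (c j) => [i|] // _ ->.
by exists j, i.
Qed.

Lemma e2_inj : injective e2.
Proof.
move=> v v'.
case: (boolP (v \in S2)) => [/S2P[j [i [cj ->]]]|H]; case: (boolP (v' \in S2)) => [/S2P[j' [i' [cj' ->]]]|H'].
- rewrite (e2_sh cj) (e2_sh cj') => -[/b1_inj Ei]; rewrite Ei in cj.
  by rewrite (Hc_inj cj cj').
- by rewrite (e2_sh cj) e2_ns.
- by rewrite (e2_sh cj') e2_ns.
- by rewrite !e2_ns => -[].
Qed.

Lemma sh1P i : reflect (exists j, c j = Some i) (sh1 i).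
Proof. by apply: (iffP existsP) => -[j /eqP cj]; exists j. Qed.

Lemma E1_inj : injective E1. Proof. exact: imset_inj e1_inj. Qed.
Lemma E2_inj : injective E2. Proof. exact: imset_inj e2_inj. Qed.

Lemma cedge_tri (V : finType) (T : {set {set V}}) t x y :
  t \in T -> x \in t -> y \in t -> x != y -> cedge T x y.
Proof. by move=> tT xt yt xy; rewrite /cedge xy; apply/existsP; exists t; rewrite tT xt yt. Qed.

Lemma surf_card (V : finType) (T : {set {set V}}) t : is_surface_complex T -> t \in T -> #|t| = 3.
Proof. by case=> H _ _ _ _; apply: H. Qed.

Lemma cedge_dist2 j j' i i' : c j = Some i -> c j' = Some i' -> j != j' ->
  cedge T2 (b2 j) (b2 j') -> cnb i i'.
Proof.
move=> cj cj' /eqP jj' /andP[bb /existsP[t /andP[tT /andP[xt yt]]]].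
apply: (Hc_sh cj cj' jj'); rewrite (Hc_pts cj) (Hc_pts cj') -!HP2.
exact: HU2 tT _ _ xt yt bb.
Qed.

Lemma cedge_dist1 j j' i i' : c j = Some i -> c j' = Some i' -> j != j' ->
  cedge T1 (b1 i) (b1 i') -> cnb i i'.
Proof.
move=> cj cj' /eqP jj' /andP[bb /existsP[t /andP[tT /andP[xt yt]]]].
apply: (Hc_sh cj cj' jj'); rewrite -!HP1.
exact: HU1 tT _ _ xt yt bb.
Qed.

Lemma E1E2 t1 t2 : t1 \in T1 -> t2 \in T2 -> E1 t1 <> E2 t2.
Proof.
move=> t1T t2T E.
have: 2 < #|t2| by rewrite (surf_card HS2 t2T).
case/card_gt2P=> x [y [z [[xt yt zt] [xy yz zx]]]].
have shv w : w \in t2 -> exists j i, c j = Some i /\ w = b2 j.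
  move=> wt; have: e2 w \in E1 t1 by rewrite E; apply: imset_f.
  case/imsetP=> a _ /e2_inl[j [i [cj -> _]]]; by exists j, i.
case: (shv x xt) => jx [ix [cx Ex]]; case: (shv y yt) => jy [iy [cy Ey]].
case: (shv z zt) => jz [iz [cz Ez]].
have neq (w w' : V2) (jw jw' : 'I_n2) : w != w' -> w = b2 jw -> w' = b2 jw' -> jw != jw'.
  by move=> ww Ew Ew'; apply: contra ww => /eqP EE; rewrite Ew Ew' EE.
have c2 (w w' : V2) (jw jw' : 'I_n2) iw iw' : w \in t2 -> w' \in t2 -> w != w' ->
   c jw = Some iw -> c jw' = Some iw' -> w = b2 jw -> w' = b2 jw' -> cnb jw jw'.
  move=> wt wt' ww cw cw' Ew Ew'; rewrite (Hc_cnb cw cw').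
  apply: (cedge_dist2 cw cw'); first exact: neq ww Ew Ew'.
  by rewrite -Ew -Ew'; apply: cedge_tri t2T _ _ _.
apply: (@cnb_tri _ jx jy jz Hn2).
- exact: neq xy Ex Ey.
- exact: neq yz Ey Ez.
- by rewrite eq_sym; apply: neq zx Ez Ex.
- exact: c2 xy cx cy Ex Ey.
- exact: c2 yz cy cz Ey Ez.
- by rewrite cnb_sym; apply: c2 zx cz cx Ez Ex.
Qed.

Definition m1G u v := #|[set t in T1 | (u \in E1 t) && (v \in E1 t)]|.
Definition m2G u v := #|[set t in T2 | (u \in E2 t) && (v \in E2 t)]|.

Lemma multE u v : edge_mult GT u v = m1G u v + m2G u v.
Proof.
rewrite /edge_mult /m1G /m2G.
have -> : [set t in GT | (u \in t) && (v \in t)] =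
  E1 @: [set t in T1 | (u \in E1 t) && (v \in E1 t)] :|:
  E2 @: [set t in T2 | (u \in E2 t) && (v \in E2 t)].
  apply/setP => t; rewrite /GT !inE; apply/idP/idP.
  - case/andP => /orP[] /imsetP[t' t'T ->] H; apply/orP; [left|right];
      by apply/imsetP; exists t' => //; rewrite inE t'T.
  - case/orP=> /imsetP[t']; rewrite inE => /andP[t'T H] ->; rewrite H andbT;
      apply/orP; [left|right]; exact: imset_f.
rewrite cardsU !card_imset; [|exact: E2_inj|exact: E1_inj].
suff -> : E1 @: [set t in T1 | (u \in E1 t) && (v \in E1 t)] :&:
   E2 @: [set t in T2 | (u \in E2 t) && (v \in E2 t)] = set0 by rewrite cards0 subn0.
apply/setP=> t; rewrite !inE; apply/negP => /andP[/imsetP[t1 + ->] /imsetP[t2 +]].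
by rewrite !inE => /andP[t1T _] /andP[t2T _]; apply: E1E2.
Qed.

Lemma m1G_e1 a a' : m1G (e1 a) (e1 a') = edge_mult T1 a a'.
Proof. by rewrite /m1G /edge_mult; apply: eq_card=> t; rewrite !inE !mem_imset //; exact: e1_inj. Qed.

Lemma m2G_e2 x y : m2G (e2 x) (e2 y) = edge_mult T2 x y.
Proof. by rewrite /m2G /edge_mult; apply: eq_card=> t; rewrite !inE !mem_imset //; exact: e2_inj. Qed.

Lemma m1G_pos u v : 0 < m1G u v -> exists a a', u = e1 a /\ v = e1 a'.
Proof.
case/card_gt0P=> t; rewrite inE => /andP[_ /andP[/imsetP[a _ ->] /imsetP[a' _ ->]]].
by exists a, a'.
Qed.

Lemma m2G_pos u v : 0 < m2G u v -> exists x y, u = e2 x /\ v = e2 y.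
Proof.
case/card_gt0P=> t; rewrite inE => /andP[_ /andP[/imsetP[a _ ->] /imsetP[a' _ ->]]].
by exists a, a'.
Qed.

Lemma shared_mult j j' i i' : c j = Some i -> c j' = Some i' -> j != j' ->
 (edge_mult T1 (b1 i) (b1 i') = 0 /\ edge_mult T2 (b2 j) (b2 j') = 0) \/
 (edge_mult T1 (b1 i) (b1 i') = 1 /\ edge_mult T2 (b2 j) (b2 j') = 1).
Proof.
move=> cj cj' jj'.
have ii' : i != i'.
  by apply: contra jj' => /eqP E; rewrite E in cj; apply/eqP; exact: Hc_inj cj cj'.
case cc: (cnb i i').
- right; split.
    by have /andP[_ /eqP] := (bdry_b i i' HB1).2 cc.
  have cc2 : cnb j j' by rewrite (Hc_cnb cj cj').
  by have /andP[_ /eqP] := (bdry_b j j' HB2).2 cc2.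
- left; split; apply/eqP; rewrite eqn0Ngt; apply/negP => H.
    have : cnb i i'.
      by apply: (cedge_dist1 cj cj' jj'); rewrite cedgeE H (inj_eq b1_inj) ii'.
    by rewrite cc.
  have : cnb i i'.
    by apply: (cedge_dist2 cj cj' jj'); rewrite cedgeE H (inj_eq b2_inj) jj'.
  by rewrite cc.
Qed.

Lemma both_pos u v : 0 < m1G u v -> 0 < m2G u v -> u != v -> m1G u v = 1 /\ m2G u v = 1.
Proof.
move=> p1 p2 uv.
case: (m1G_pos p1) => a [a' [Eu Ev]]; case: (m2G_pos p2) => x [y [Eu' Ev']].
subst u v.
move: (esym Eu') => /e2_inl[j [i [cj Ex Ea]]].
move: (esym Ev') => /e2_inl[j' [i' [cj' Ey Ea']]].
have jj' : j != j' by apply: contra uv => /eqP E; rewrite Eu' Ev' Ex Ey E.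
move: p1 p2; rewrite m1G_e1 Eu' Ev' m2G_e2 Ex Ey Ea Ea'.
by case: (shared_mult cj cj' jj') => [[-> ->]|[-> ->]].
Qed.

Lemma G_mult12 u v : cedge GT u v -> edge_mult GT u v = 1 \/ edge_mult GT u v = 2.
Proof.
rewrite cedgeE multE => /andP[uv pos].
case: (posnP (m1G u v)) => [m10|p1]; case: (posnP (m2G u v)) => [m20|p2].
- by rewrite m10 m20 in pos.
- rewrite m10 add0n.
  case: (m2G_pos p2) => x [y [Eu Ev]]; subst u v; rewrite m2G_e2 in p2 *.
  apply: (surf12 (u:=x) (v:=y) HS2); rewrite cedgeE p2 andbT; apply: contra uv => /eqP -> //.
- rewrite m20 addn0.
  case: (m1G_pos p1) => x [y [Eu Ev]]; subst u v; rewrite m1G_e1 in p1 *.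
  apply: (surf12 (u:=x) (v:=y) HS1); rewrite cedgeE p1 andbT; apply: contra uv => /eqP -> //.
- by right; case: (both_pos p1 p2 uv) => -> ->.
Qed.

Lemma G_bdry u v : bdry_edge GT u v <->
  (exists i i', [/\ cnb i i', ~~ (sh1 i && sh1 i'), u = e1 (b1 i) & v = e1 (b1 i')]) \/
  (exists j j', [/\ cnb j j', ~~ (sh2 j && sh2 j'), u = e2 (b2 j) & v = e2 (b2 j')]).
Proof.
rewrite bdryE multE; split.
- case/andP=> uv /eqP H.
  case: (posnP (m1G u v)) => [m10|p1]; case: (posnP (m2G u v)) => [m20|p2].
  + by rewrite m10 m20 in H.
  + right; rewrite m10 add0n in H.
    case: (m2G_pos p2) => x [y [Eu Ev]]; subst u v; rewrite m2G_e2 in H.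
    have xy : x != y by apply: contra uv => /eqP ->.
    have : bdry_edge T2 x y by rewrite bdryE xy H.
    case/sbc_iff: HB2 => _ HH; rewrite HH => -[j [j' /andP[/andP[cc /eqP Ex] /eqP Ey]]].
    exists j, j'; split => //; [|by rewrite Ex|by rewrite Ey].
    apply/negP=> /andP[]; rewrite /sh2; case cj: (c j) => [i|] // _; case cj': (c j') => [i'|] // _.
    have jj' : j != j' by apply: contra xy => /eqP E; rewrite Ex Ey E.
    move: m10; rewrite Ex Ey (e2_sh cj) (e2_sh cj') m1G_e1 => m10.
    case: (shared_mult cj cj' jj') => [[_ E2]|[E1 _]].
      by rewrite Ex Ey E2 in H.
    by rewrite E1 in m10.
  + left; rewrite m20 addn0 in H.
    case: (m1G_pos p1) => x [y [Eu Ev]]; subst u v; rewrite m1G_e1 in H.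
    have xy : x != y by apply: contra uv => /eqP ->.
    have : bdry_edge T1 x y by rewrite bdryE xy H.
    case/sbc_iff: HB1 => _ HH; rewrite HH => -[i [i' /andP[/andP[cc /eqP Ex] /eqP Ey]]].
    exists i, i'; split => //; [|by rewrite Ex|by rewrite Ey].
    apply/negP=> /andP[/sh1P[j cj] /sh1P[j' cj']].
    have jj' : j != j'.
      apply: contra xy => /eqP E; rewrite E in cj; rewrite Ex Ey.
      by move: cj; rewrite cj' => -[->].
    move: m20; rewrite Ex Ey -(e2_sh cj) -(e2_sh cj') m2G_e2 => m20.
    case: (shared_mult cj cj' jj') => [[E1 _]|[_ E2]].
      by rewrite Ex Ey E1 in H.
    by rewrite E2 in m20.
  + by have [E1 E2] := both_pos p1 p2 uv; rewrite E1 E2 in H.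
- case=> [[i [i' [cc ns -> ->]]]|[j [j' [cc ns -> ->]]]].
  + have := (bdry_b i i' HB1).2 cc; rewrite bdryE => /andP[bb /eqP E1].
    rewrite m1G_e1 E1 (inj_eq e1_inj) bb /=.
    suff -> : m2G (e1 (b1 i)) (e1 (b1 i')) = 0 by [].
    apply/eqP; rewrite eqn0Ngt; apply/negP => /m2G_pos[x [y [Ex Ey]]].
    move: (esym Ex) => /e2_inl [j [i0 [cj _ /b1_inj Ei]]].
    move: (esym Ey) => /e2_inl [j' [i0' [cj' _ /b1_inj Ei']]].
    move/negP: ns; apply; apply/andP; split; apply/sh1P.
      by exists j; rewrite cj Ei.
    by exists j'; rewrite cj' Ei'.
  + have := (bdry_b j j' HB2).2 cc; rewrite bdryE => /andP[bb /eqP E2].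
    rewrite m2G_e2 E2 (inj_eq e2_inj) bb /=.
    suff -> : m1G (e2 (b2 j)) (e2 (b2 j')) = 0 by [].
    apply/eqP; rewrite eqn0Ngt; apply/negP => /m1G_pos[x [y [Ex Ey]]].
    move: Ex => /e2_inl [j0 [i0 [cj /b2_inj Ej _]]].
    move: Ey => /e2_inl [j0' [i0' [cj' /b2_inj Ej' _]]].
    move/negP: ns; apply; apply/andP; split; rewrite /sh2.
      by rewrite Ej cj.
    by rewrite Ej' cj'.
Qed.

Lemma GT_E1 t : t \in T1 -> E1 t \in GT.
Proof. by move=> tT; rewrite /GT inE; apply/orP; left; apply: imset_f. Qed.
Lemma GT_E2 t : t \in T2 -> E2 t \in GT.
Proof. by move=> tT; rewrite /GT inE; apply/orP; right; apply: imset_f. Qed.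

Lemma link_e1 a w x : link_rel T1 a w x -> link_rel GT (e1 a) (e1 w) (e1 x).
Proof.
rewrite /link_rel => /andP[wx /existsP[t /andP[tT /eqP Et]]].
rewrite (inj_eq e1_inj) wx /=; apply/existsP; exists (E1 t).
by rewrite GT_E1 //= Et /E1 !imsetU !imset_set1.
Qed.

Lemma link_e2 a w x : link_rel T2 a w x -> link_rel GT (e2 a) (e2 w) (e2 x).
Proof.
rewrite /link_rel => /andP[wx /existsP[t /andP[tT /eqP Et]]].
rewrite (inj_eq e2_inj) wx /=; apply/existsP; exists (E2 t).
by rewrite GT_E2 //= Et /E2 !imsetU !imset_set1.
Qed.

Lemma G_nbr v w : cedge GT v w ->
  (exists a a', [/\ v = e1 a, w = e1 a' & cedge T1 a a']) \/
  (exists x y, [/\ v = e2 x, w = e2 y & cedge T2 x y]).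
Proof.
rewrite cedgeE multE => /andP[vw]; case: (posnP (m1G v w)) => [m10|p1] H.
- right; rewrite m10 add0n in H; case: (m2G_pos H) => x [y [Ev Ew]].
  exists x, y; split => //; rewrite cedgeE -m2G_e2 -Ev -Ew H andbT.
  by apply: contra vw => /eqP E; rewrite Ev Ew E.
- left; case: (m1G_pos p1) => x [y [Ev Ew]].
  exists x, y; split => //; rewrite cedgeE -m1G_e1 -Ev -Ew p1 andbT.
  by apply: contra vw => /eqP E; rewrite Ev Ew E.
Qed.

Lemma conn1 v a a1 a2 : v = e1 a -> cedge T1 a a1 -> cedge T1 a a2 ->
  connect (link_rel GT v) (e1 a1) (e1 a2).
Proof.
move=> -> h1 h2; case: HS1 => _ _ _ Hl _.
by apply: (connect_map (@link_e1 a)); apply: Hl.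
Qed.

Lemma conn2 v a a1 a2 : v = e2 a -> cedge T2 a a1 -> cedge T2 a a2 ->
  connect (link_rel GT v) (e2 a1) (e2 a2).
Proof.
move=> -> h1 h2; case: HS2 => _ _ _ Hl _.
by apply: (connect_map (@link_e2 a)); apply: Hl.
Qed.

Lemma hub a y : e1 a = e2 y -> exists a' y', [/\ cedge T1 a a', cedge T2 y y' & e1 a' = e2 y'].
Proof.
move/esym/e2_inl=> [j [i [cj -> ->]]].
case: (Hc_nb cj) => j' [i' [cj' cc]].
exists (b1 i'), (b2 j'); split; last by rewrite (e2_sh cj').
  by have /andP[] := (bdry_b i i' HB1).2 cc.
have cc2 : cnb j j' by rewrite (Hc_cnb cj cj').
by have /andP[] := (bdry_b j j' HB2).2 cc2.
Qed.

Lemma G_link v w x : cedge GT v w -> cedge GT v x -> connect (link_rel GT v) w x.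
Proof.
case/G_nbr=> [[a [a1 [Ev -> h1]]]|[y [y1 [Ev -> h1]]]];
case/G_nbr=> [[a' [a2 [Ev' -> h2]]]|[y' [y2 [Ev' -> h2]]]].
- rewrite Ev in Ev'; move/e1_inj: Ev' => E; rewrite -E in h2; exact: conn1 Ev h1 h2.
- have E : e1 a = e2 y' by rewrite -Ev -Ev'.
  case: (hub E) => a3 [y3 [h3 h4 E3]].
  apply: (connect_trans (y := e1 a3)); first exact: conn1 Ev h1 h3.
  by rewrite E3; apply: conn2 Ev' h4 h2.
- have E : e1 a' = e2 y by rewrite -Ev -Ev'.
  case: (hub E) => a3 [y3 [h3 h4 E3]].
  apply: (connect_trans (y := e1 a3)); last exact: conn1 Ev' h3 h2.
  by rewrite E3; apply: conn2 Ev h1 h4.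
- rewrite Ev in Ev'; move/e2_inj: Ev' => E; rewrite -E in h2; exact: conn2 Ev h1 h2.
Qed.

Lemma cedge_e1 a a' : cedge T1 a a' -> cedge GT (e1 a) (e1 a').
Proof.
case/andP=> aa' /existsP[t /andP[tT /andP[ta ta']]].
rewrite /cedge (inj_eq e1_inj) aa' /=; apply/existsP; exists (E1 t).
by rewrite GT_E1 //= !(mem_imset _ _ e1_inj) ta ta'.
Qed.

Lemma cedge_e2 a a' : cedge T2 a a' -> cedge GT (e2 a) (e2 a').
Proof.
case/andP=> aa' /existsP[t /andP[tT /andP[ta ta']]].
rewrite /cedge (inj_eq e2_inj) aa' /=; apply/existsP; exists (E2 t).
by rewrite GT_E2 //= !(mem_imset _ _ e2_inj) ta ta'.
Qed.

Lemma G_conn u v : connect (cedge GT) u v.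
Proof.
case: Hc_ex => j0 [i0 c0].
have H1 a : connect (cedge GT) (e1 a) (e1 (b1 i0)) /\ connect (cedge GT) (e1 (b1 i0)) (e1 a).
  by case: HS1 => _ _ _ _ Hc; split; apply: (connect_map cedge_e1); apply: Hc.
have H2 a : connect (cedge GT) (e2 a) (e1 (b1 i0)) /\ connect (cedge GT) (e1 (b1 i0)) (e2 a).
  by rewrite -(e2_sh c0); case: HS2 => _ _ _ _ Hc; split; apply: (connect_map cedge_e2); apply: Hc.
have H u' : connect (cedge GT) u' (e1 (b1 i0)) /\ connect (cedge GT) (e1 (b1 i0)) u'.
  case: u' => [a|w]; first exact: H1.
  by rewrite -e2_val; apply: H2.
apply: connect_trans (proj1 (H u)) (proj2 (H v)).
Qed.

Lemma G_surface : is_surface_complex GT.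
Proof.
split.
- move=> t; rewrite /GT inE => /orP[] /imsetP[t' t'T ->]; rewrite card_imset.
  + exact: surf_card HS1 t'T.
  + exact: e1_inj.
  + exact: surf_card HS2 t'T.
  + exact: e2_inj.
- case=> [a|w].
    case: HS1 => _ H _ _ _; case: (H a) => t tT ta.
    by exists (E1 t); [apply: GT_E1 | apply: imset_f].
  case: HS2 => _ H _ _ _; case: (H (val w)) => t tT ta.
  by exists (E2 t); [apply: GT_E2 | rewrite -e2_val; apply: imset_f].
- exact: G_mult12.
- exact: G_link.
- exact: G_conn.
Qed.

Lemma Gf_e2 x : Gf (e2 x) = f2 x.
Proof.
case: (boolP (x \in S2)) => [/S2P[j [i [cj ->]]]|H]; last by rewrite e2_ns.
by rewrite (e2_sh cj) /= HP1 HP2 (Hc_pts cj).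
Qed.

Lemma G_unit : unit_triangles GT Gf.
Proof.
move=> t; rewrite /GT inE => /orP[] /imsetP[t' t'T ->] u v /imsetP[x xt ->] /imsetP[y yt ->] uv.
  apply: HU1 t'T _ _ xt yt _; by apply: contra uv => /eqP ->.
rewrite !Gf_e2; apply: HU2 t'T _ _ xt yt _; by apply: contra uv => /eqP ->.
Qed.

Variable P : polygon.
Variable g : 'I_(size P) -> 'I_n1 + 'I_n2.
Hypothesis Hg_inj : injective g.
Hypothesis Hg_ns : forall k j, g k = inr j -> c j = None.
Hypothesis Hg_pts : forall k : 'I_(size P), nth p0 P k =
  match g k with inl i => nth p0 P1 i | inr j => nth p0 P2 j end.
Hypothesis Hg_cyc1 : forall k k', cnb k k' ->
  (exists i i', [/\ g k = inl i, g k' = inl i', cnb i i' & ~~ (sh1 i && sh1 i')]) \/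
  (exists j j', [/\ g k = h2 j, g k' = h2 j', cnb j j' & ~~ (sh2 j && sh2 j')]).
Hypothesis Hg_cyc2 : forall i i', cnb i i' -> ~~ (sh1 i && sh1 i') ->
  exists k k', [/\ cnb k k', g k = inl i & g k' = inl i'].
Hypothesis Hg_cyc3 : forall j j', cnb j j' -> ~~ (sh2 j && sh2 j') ->
  exists k k', [/\ cnb k k', g k = h2 j & g k' = h2 j'].

Definition Gb k := vtx (g k).

Lemma vtx_h2 j : vtx (h2 j) = e2 (b2 j).
Proof. by rewrite /h2; case cj: (c j) => [i|] //=; rewrite (e2_sh cj). Qed.

Lemma Gb_inj : injective Gb.
Proof.
move=> k k' E; apply: Hg_inj; move: E; rewrite /Gb.
case Egk: (g k) => [i|j]; case Egk': (g k') => [i'|j'] /=.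
- by move/e1_inj/b1_inj ->.
- move/esym/e2_inl=> [j0 [i0 [cj /b2_inj Ej _]]].
  by move: (Hg_ns Egk'); rewrite Ej cj.
- move/e2_inl=> [j0 [i0 [cj /b2_inj Ej _]]].
  by move: (Hg_ns Egk); rewrite Ej cj.
- by move/e2_inj/b2_inj ->.
Qed.

Lemma G_sbc : single_boundary_cycle GT Gb.
Proof.
apply/sbc_iff; split; first exact: Gb_inj.
move=> u v; rewrite G_bdry; split.
- case=> [[i [i' [cc ns -> ->]]]|[j [j' [cc ns -> ->]]]].
  + by case: (Hg_cyc2 cc ns) => k [k' [ck E E']]; exists k, k'; rewrite ck /Gb E E' !eqxx.
  + by case: (Hg_cyc3 cc ns) => k [k' [ck E E']]; exists k, k'; rewrite ck /Gb E E' !vtx_h2 !eqxx.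
- case=> k [k' /andP[/andP[ck /eqP ->] /eqP ->]].
  case: (Hg_cyc1 ck) => [[i [i' [E E' cc ns]]]|[j [j' [E E' cc ns]]]].
  + by left; exists i, i'; rewrite /Gb E E'.
  + by right; exists j, j'; rewrite /Gb E E' !vtx_h2.
Qed.

Lemma G_pos k : Gf (Gb k) = nth p0 P k.
Proof. by rewrite Hg_pts /Gb; case: (g k) => [i|j] /=; [exact: HP1 | rewrite Gf_e2 HP2]. Qed.

Theorem glue : domable P.
Proof.
exists GV, GT, Gf, Gb; split.
- exact: G_surface.
- exact: G_sbc.
- exact: G_unit.
- exact: G_pos.
Qed.

End Glue.


Local Open Scope R_scope.

Local Close Scope R_scope.

Definition cnbN n i j := (j == i.+1 %% n) || (i == j.+1 %% n).
Definition allN n (p : pred nat) := all p (iota 0 n).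
Definition hasN n (p : pred nat) := has p (iota 0 n).

Lemma allNP n p : allN n p -> forall k, k < n -> p k.
Proof. by move=> /allP H k Hk; apply: H; rewrite mem_iota add0n. Qed.

Lemma hasNP n p : hasN n p -> exists2 k, k < n & p k.
Proof. by case/hasP=> k; rewrite mem_iota add0n => Hk pk; exists k. Qed.

Lemma hasNI n (p : pred nat) k : k < n -> p k -> hasN n p.
Proof. by move=> Hk pk; apply/hasP; exists k; rewrite // mem_iota add0n. Qed.

Definition sv n1 n2 (s : 'I_n1 + 'I_n2) : nat + nat :=
  match s with inl i => inl (val i) | inr j => inr (val j) end.

Lemma sv_inj n1 n2 : injective (@sv n1 n2).
Proof. by case=> [i|j] [i'|j'] //= [] /val_inj ->. Qed.

Section GlueN.
Variables (V1 V2 : finType) (T1 : {set {set V1}}) (T2 : {set {set V2}}).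
Variables (f1 : V1 -> point) (f2 : V2 -> point) (P1 P2 : polygon).
Local Notation n1 := (size P1).
Local Notation n2 := (size P2).
Variables (b1 : 'I_n1 -> V1) (b2 : 'I_n2 -> V2).
Hypothesis HS1 : is_surface_complex T1.
Hypothesis HB1 : single_boundary_cycle T1 b1.
Hypothesis HU1 : unit_triangles T1 f1.
Hypothesis HP1 : forall i, f1 (b1 i) = nth p0 P1 i.
Hypothesis HS2 : is_surface_complex T2.
Hypothesis HB2 : single_boundary_cycle T2 b2.
Hypothesis HU2 : unit_triangles T2 f2.
Hypothesis HP2 : forall i, f2 (b2 i) = nth p0 P2 i.
Variable P : polygon.
Local Notation m := (size P).
Variables (x0 : V1) (d1 : 'I_n1) (d2 : 'I_n2).
Variable cN : nat -> option nat.
Variable gN : nat -> nat + nat.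

Definition sh1N i := hasN n2 (fun j => cN j == Some i).
Definition h2N j : nat + nat := if cN j is Some i then inl i else inr j.

Hypothesis Hn2 : 3 < n2.
Hypothesis Bc_rng : allN n2 (fun j => if cN j is Some i then i < n1 else true).
Hypothesis Bg_rng : allN m (fun k => match gN k with inl i => i < n1 | inr j => j < n2 end).
Hypothesis Bc_inj : allN n2 (fun j => allN n2 (fun j' => (cN j != None) && (cN j == cN j') ==> (j == j'))).
Hypothesis Bc_ex : hasN n2 (fun j => cN j != None).
Hypothesis Bc_nb : allN n2 (fun j => if cN j is Some i then
   hasN n2 (fun j' => if cN j' is Some i' then cnbN n1 i i' else false) else true).
Hypothesis Bc_cnb : allN n2 (fun j => allN n2 (fun j' =>
   match cN j, cN j' with Some i, Some i' => cnbN n2 j j' == cnbN n1 i i' | _, _ => true end)).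
Hypothesis Rc_pts : forall j i, j < n2 -> cN j = Some i -> nth p0 P1 i = nth p0 P2 j.
Hypothesis Rc_sh : forall j j' i i', j < n2 -> j' < n2 -> cN j = Some i -> cN j' = Some i' -> j <> j' ->
  dist2 (nth p0 P1 i) (nth p0 P1 i') = R1 -> cnbN n1 i i'.
Hypothesis Bg_inj : allN m (fun k => allN m (fun k' => (gN k == gN k') ==> (k == k'))).
Hypothesis Bg_ns : allN m (fun k => if gN k is inr j then cN j == None else true).
Hypothesis Rg_pts : forall k, k < m -> nth p0 P k =
  match gN k with inl i => nth p0 P1 i | inr j => nth p0 P2 j end.
Hypothesis Bg_cyc1 : allN m (fun k => allN m (fun k' => cnbN m k k' ==>
  (match gN k, gN k' with inl i, inl i' => cnbN n1 i i' && ~~ (sh1N i && sh1N i') | _, _ => false end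
   || hasN n2 (fun j => hasN n2 (fun j' => (gN k == h2N j) && (gN k' == h2N j') &&
        cnbN n2 j j' && ~~ ((cN j != None) && (cN j' != None))))))).
Hypothesis Bg_cyc2 : allN n1 (fun i => allN n1 (fun i' => cnbN n1 i i' && ~~ (sh1N i && sh1N i') ==>
  hasN m (fun k => hasN m (fun k' => cnbN m k k' && (gN k == inl i) && (gN k' == inl i'))))).
Hypothesis Bg_cyc3 : allN n2 (fun j => allN n2 (fun j' => cnbN n2 j j' && ~~ ((cN j != None) && (cN j' != None)) ==>
  hasN m (fun k => hasN m (fun k' => cnbN m k k' && (gN k == h2N j) && (gN k' == h2N j'))))).

Definition cc (j : 'I_n2) : option 'I_n1 := if cN j is Some i then insub i else None.
Definition gg (k : 'I_m) : 'I_n1 + 'I_n2 :=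
  match gN k with inl i => inl (insubd d1 i) | inr j => inr (insubd d2 j) end.

Lemma ccE j i : (cc j = Some i) <-> (cN j = Some (val i)).
Proof.
rewrite /cc; case E: (cN j) => [i'|]; last by [].
have H := allNP Bc_rng (ltn_ord j); rewrite E in H.
rewrite insubT; split=> [[<-] //|[Ei]].
by congr Some; apply: val_inj; rewrite /= Ei.
Qed.

Lemma ccN j : (cc j == None) = (cN j == None).
Proof. by rewrite /cc; case E: (cN j) => [i'|] //; have H := allNP Bc_rng (ltn_ord j); rewrite E in H; rewrite insubT. Qed.

Lemma ggE k : sv (gg k) = gN k.
Proof.
have H := allNP Bg_rng (ltn_ord k).
by rewrite /gg; case: (gN k) H => [i|j] H /=; rewrite insubdK.
Qed.

Lemma sh1E i : sh1 cc i = sh1N i.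
Proof.
apply/sh1P/idP => [[j /ccE cj]|/hasNP[j Hj /eqP cj]].
  by apply: (hasNI (ltn_ord j)); rewrite cj.
by exists (Ordinal Hj); apply/ccE.
Qed.

Lemma sh2E j : sh2 cc j = (cN j != None).
Proof. by rewrite /sh2 ccN. Qed.

Lemma h2E j : sv (h2 cc j) = h2N j.
Proof.
rewrite /h2 /h2N; case E: (cc j) => [i|].
  by move/ccE: E => ->.
by move: (ccN j); rewrite E eqxx => /esym/eqP ->.
Qed.

Lemma gg_h2 k j : (gg k == h2 cc j) = (gN k == h2N j).
Proof. by rewrite -ggE -h2E (inj_eq (@sv_inj _ _)). Qed.

Lemma gg_inl k i : (gg k == inl i) = (gN k == inl (val i)).
Proof. by rewrite -ggE -[inl (val i)]/(sv (inl i : 'I_n1 + 'I_n2)) (inj_eq (@sv_inj _ _)). Qed.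

Theorem glueN : domable P.
Proof.
apply: (@glue V1 V2 T1 T2 f1 f2 P1 P2 b1 b2 HS1 HB1 HU1 HP1 HS2 HB2 HU2 HP2 x0 cc Hn2 _ _ _ _ _ _ P gg).
- move=> j j' i /ccE cj /ccE cj'; apply: val_inj; apply/eqP.
  have := allNP (allNP Bc_inj (ltn_ord j)) (ltn_ord j'); rewrite cj cj' eqxx /=.
  by apply.
- case/hasNP: Bc_ex => j Hj; case E: (cN j) => [i|] // _.
  have Hi := allNP Bc_rng Hj; rewrite E in Hi.
  by exists (Ordinal Hj), (Ordinal Hi); apply/ccE.
- move=> j i /ccE cj; have := allNP Bc_nb (ltn_ord j); rewrite cj.
  case/hasNP=> j' Hj'; case E: (cN j') => [i'|] // cn.
  have Hi := allNP Bc_rng Hj'; rewrite E in Hi.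
  by exists (Ordinal Hj'), (Ordinal Hi); split => //; apply/ccE.
- move=> j j' i i' /ccE cj /ccE cj'.
  by have := allNP (allNP Bc_cnb (ltn_ord j)) (ltn_ord j'); rewrite cj cj' => /eqP.
- by move=> j i /ccE cj; apply: Rc_pts.
- move=> j j' i i' /ccE cj /ccE cj' jj'; apply: Rc_sh cj cj' _ => //.
  by move=> E; apply: jj'; apply: val_inj.
- move=> k k' E; apply: val_inj; apply/eqP.
  have := allNP (allNP Bg_inj (ltn_ord k)) (ltn_ord k'); rewrite -!ggE E eqxx.
  by apply.
- move=> k j E; apply/eqP; rewrite ccN.
  by have := allNP Bg_ns (ltn_ord k); rewrite -ggE E.
- by move=> k; rewrite Rg_pts // -ggE; case: (gg k).
- move=> k k' ck0; have ck : cnbN m k k' := ck0.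
  have := allNP (allNP Bg_cyc1 (ltn_ord k)) (ltn_ord k'); rewrite ck /= -!ggE.
  case/orP.
    case Ek: (gg k) => [i|j] //; case Ek': (gg k') => [i'|j'] //= H.
    by case/andP: H => H1 H2; left; exists i, i'; rewrite !sh1E; split.
  case/hasNP=> j Hj /hasNP[j' Hj' /andP[/andP[/andP[E1 E2] cn] ns]].
  right; exists (Ordinal Hj), (Ordinal Hj'); split => //.
  + by apply/eqP; rewrite gg_h2 -ggE.
  + by apply/eqP; rewrite gg_h2 -ggE.
  + by rewrite !sh2E.
- move=> i i' cn0 ns; have cn : cnbN n1 i i' := cn0.
  have := allNP (allNP Bg_cyc2 (ltn_ord i)) (ltn_ord i'); rewrite -!sh1E cn ns /=.
  case/hasNP=> k Hk /hasNP[k' Hk' /andP[/andP[ck E1] E2]].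
  by exists (Ordinal Hk), (Ordinal Hk'); split => //; apply/eqP; rewrite gg_inl.
- move=> j j' cn0 ns; have cn : cnbN n2 j j' := cn0.
  have := allNP (allNP Bg_cyc3 (ltn_ord j)) (ltn_ord j'); rewrite -!sh2E cn ns /=.
  case/hasNP=> k Hk /hasNP[k' Hk' /andP[/andP[ck E1] E2]].
  by exists (Ordinal Hk), (Ordinal Hk'); split => //; apply/eqP; rewrite gg_h2.
Qed.

End GlueN.


Local Open Scope R_scope.


Definition refl (p : point) : point := let '(x, y, z) := p in (x, - y, z).
Definition trans (dx dy : R) (p : point) : point := let '(x, y, z) := p in (x + dx, y + dy, z).

Lemma refl_iso p q : dist2 (refl p) (refl q) = dist2 p q.
Proof. by case: p => [[x y] z]; case: q => [[x' y'] z']; rewrite /dist2 /=; ring. Qed.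

Lemma trans_iso dx dy p q : dist2 (trans dx dy p) (trans dx dy q) = dist2 p q.
Proof. by case: p => [[x y] z]; case: q => [[x' y'] z']; rewrite /dist2 /=; ring. Qed.

Lemma iso_unit (V : finType) (T : {set {set V}}) f (phi : point -> point) :
  (forall p q, dist2 (phi p) (phi q) = dist2 p q) ->
  unit_triangles T f -> unit_triangles T (fun v => phi (f v)).
Proof. rewrite /unit_triangles => H HU t tT u v ut vt uv; rewrite H; exact: HU tT _ _ ut vt uv. Qed.

Lemma iso_pos (V : finType) (P : polygon) (b : 'I_(size P) -> V) f (phi : point -> point) :
  (forall i : 'I_(size P), f (b i) = nth p0 P i) ->
  forall i : 'I_(size P), phi (f (b i)) = nth p0 (map phi P) i.
Proof. by move=> H i; rewrite H (nth_map p0). Qed.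

Ltac pteq := rewrite /pt /refl /trans /=; congr (_, _, _); lra.

Definition ptAB : polygon := [:: pt (-1/2) 0 0; pt (-1/4) (s15/4) 0; pt 0 (s15/2) 0;
  pt (1/4) (s15/4) 0; pt 0 0 0; pt (-1/4) (-(s15/4)) 0].
Definition ptABD : polygon := [:: pt (-1/2) 0 0; pt (-1/4) (s15/4) 0; pt 0 (s15/2) 0;
  pt (1/4) (s15/4) 0; pt (1/2) 0 0; pt (1/4) (-(s15/4)) 0; pt 0 0 0; pt (-1/4) (-(s15/4)) 0].

Local Close Scope R_scope.

Lemma tri_rho : domable tri221 -> domable rho_diamond2.
Proof.
case=> V [T [f [b [HS HB HU HP]]]].
have HU' := iso_unit refl_iso HU.
have HP' := iso_pos refl HP.
apply: (glueN (P1 := tri221) (P2 := map refl tri221) (b1 := b) (b2 := b) (P := rho_diamond2)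
  (cN := fun j => match j with 0 => Some 0 | 1 => Some 1 | _ => None end)
  (gN := fun k => match k with 0 => inl 0 | 1 => inl 4 | 2 => inl 3 | 3 => inl 2 | 4 => inl 1
                  | 5 => inr 2 | 6 => inr 3 | _ => inr 4 end)
  HS HB HU HP HS HB HU' HP' (b ord0) ord0 ord0); try by [].
- move=> [|[|j]] i //= _ [<-]; pteq.
- by move=> [|[|j]] [|[|j']] i i' //= _ _ [<-] [<-].
- move=> [|[|[|[|[|[|[|[|k]]]]]]]] //= _; pteq.
Qed.

Lemma rho_AB : domable rho_diamond -> domable ptAB.
Proof.
case=> V [T [f [b [HS HB HU HP]]]].
apply: (glueN (P1 := map (trans (-1/4) 0) rho_diamond) (P2 := map (trans 0 (s15/4)) rho_diamond)
  (b1 := b) (b2 := b) (P := ptAB)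
  (cN := fun j => match j with 0 => Some 1 | 3 => Some 2 | _ => None end)
  (gN := fun k => match k with 0 => inl 0 | 1 => inl 1 | 2 => inr 1 | 3 => inr 2 | 4 => inl 2
                  | _ => inl 3 end)
  HS HB (iso_unit (@trans_iso _ _) HU) (iso_pos _ HP) HS HB (iso_unit (@trans_iso _ _) HU) (iso_pos _ HP)
  (b ord0) ord0 ord0); try by [].
- move=> [|[|[|[|j]]]] i //= _ [<-]; pteq.
- by move=> [|[|[|[|j]]]] [|[|[|[|j']]]] i i' //= _ _ [<-] [<-].
- move=> [|[|[|[|[|[|k]]]]]] //= _; pteq.
Qed.

Lemma rho_ABD : domable rho_diamond -> domable ptABD.
Proof.
move=> Hr; case: (rho_AB Hr) => V1 [T1 [f1 [b1 [HS1 HB1 HU1 HP1]]]].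
case: Hr => V [T [f [b [HS HB HU HP]]]].
apply: (glueN (P1 := ptAB) (P2 := map (trans (1/4) 0) rho_diamond)
  (b1 := b1) (b2 := b) (P := ptABD)
  (cN := fun j => match j with 0 => Some 4 | 1 => Some 3 | _ => None end)
  (gN := fun k => match k with 0 => inl 0 | 1 => inl 1 | 2 => inl 2 | 3 => inl 3 | 4 => inr 2
                  | 5 => inr 3 | 6 => inl 4 | _ => inl 5 end)
  HS1 HB1 HU1 HP1 HS HB (iso_unit (@trans_iso _ _) HU) (iso_pos _ HP)
  (b1 ord0) ord0 ord0); try by [].
- move=> [|[|[|[|j]]]] i //= _ [<-]; pteq.
- by move=> [|[|[|[|j]]]] [|[|[|[|j']]]] i i' //= _ _ [<-] [<-].
- move=> [|[|[|[|[|[|[|[|k]]]]]]]] //= _; pteq.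
Qed.

Lemma rho_rho2 : domable rho_diamond -> domable rho_diamond2.
Proof.
move=> Hr; case: (rho_ABD Hr) => V1 [T1 [f1 [b1 [HS1 HB1 HU1 HP1]]]].
case: Hr => V [T [f [b [HS HB HU HP]]]].
apply: (glueN (P1 := ptABD) (P2 := map (trans 0 (-(s15/4))) rho_diamond)
  (b1 := b1) (b2 := b) (P := rho_diamond2)
  (cN := fun j => match j with 0 => Some 7 | 1 => Some 6 | 2 => Some 5 | _ => None end)
  (gN := fun k => match k with 0 => inl 0 | 1 => inl 1 | 2 => inl 2 | 3 => inl 3 | 4 => inl 4
                  | 5 => inl 5 | 6 => inr 3 | _ => inl 7 end)
  HS1 HB1 HU1 HP1 HS HB (iso_unit (@trans_iso _ _) HU) (iso_pos _ HP)
  (b1 ord0) ord0 ord0); try by [].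
- move=> [|[|[|[|j]]]] i //= _ [<-]; pteq.
- move=> [|[|[|[|j]]]] [|[|[|[|j']]]] i i' //= _ _ [<-] [<-] // _.
  + rewrite /dist2 /pt /=; lra.
  + rewrite /dist2 /pt /=; lra.
- move=> [|[|[|[|[|[|[|[|k]]]]]]]] //= _; pteq.
Qed.


Theorem mainTheorem18 :
  ~ domable rho_diamond2 -> ~ domable tri221 /\ ~ domable rho_diamond.
Proof. by move=> H; split => [/tri_rho|/rho_rho2]. Qed.
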